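(* Let $P$ be a finite graded poset with $\hat0,\hat1$. (1) If $x,y\in P-\{\hat0,\hat1\}$ with $x$ covering $y$, and $x',y'$ denote the new elements of $\mathcal U(P;x,y)$, then $\mathcal Z(\mathcal U(P;x,y);x',y',y)=P$. (2) If $x,y,z\in P-\{\hat0,\hat1\}$ satisfy the zipping hypotheses, then $\mathcal O(\mathcal Z(P;x,y,z))$ is obtained from $\mathcal O(P)$ by first contracting $y$ to $x$ and then contracting $x$ to $z$. (3) If $x$ covers $y$, then $\mathcal O(\mathcal U(P;x,y))$ is obtained from $\mathcal O(P)$ by first performing the edge subdivision of $\{x,y\}$ with new vertex $x'$, and then the edge subdivision of $\{x,x'\}$ with new vertex $y'$.
   Context: $\mathcal O(P)$ denotes the simplicial complex of chains of $P-\{\hat0,\hat1\}$; $r$ is the rank function. Zipping: let $x,y,z\in P-\{\hat0,\hat1\}$ be such that (i) $x$ covers exactly $y$ and $z$, (ii) $x$ is the unique minimal upper bound of $y$ and $z$, (iii) $y$ and $z$ cover exactly the same elements; $\mathcal Z(P;x,y,z)$ is the poset obtained from $P$ by deleting $x,y$ and adding the relations $w>z$ for all relations $w>y$. Unzipping: for $x,y\in P-\{\hat0,\hat1\}$ with $x$ covering $y$, $\mathcal U(P;x,y)$ is the graded poset obtained by deleting the cover relation $y<x$, adding new elements $x',y'$ with $r(x')=r(x)$, $r(y')=r(y)$, and adding the cover relations $x'<w$ for every cover $x<w$, $w<y'$ for every cover $w<y$, and $y'<x'$, $y<x'$, $y'<x$. For a simplicial complex $\Delta$ with edge $\{i,j\}$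 and $\mathrm{lk}_\Delta(F)=\{G: G\cap F=\emptyset, G\cup F\in\Delta\}$: the edge subdivision of $\{i,j\}$ by a new vertex $v$ is $\{F\in\Delta:F\not\supseteq\{i,j\}\}\cup\{F\cup\{v\},F\cup\{i,v\},F\cup\{j,v\}:F\in\mathrm{lk}_\Delta(\{i,j\})\}$; the edge contraction of $i$ to $j$ is $\{F\in\Delta:i\notin F\}\cup\{(F\setminus\{i\})\cup\{j\}: i\in F\in\Delta\}$. *)

(* Defs.v *)
From mathcomp Require Import all_boot.
Set Implicit Arguments. Unset Strict Implicit. Unset Printing Implicit Defensive.

(* A finite poset is given by a carrier C : {set T} inside an ambient finite
   type T (which may contain further, unused elements, so that new elements
   can be adjoined) together with a strict order relation lt (only its
   restriction to C matters). *)
Section PosetDefs.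
Variable T : finType.

Definition covers (C : {set T}) (lt : rel T) (a b : T) : bool :=
  [&& a \in C, b \in C, lt a b & [forall c in C, ~~ (lt a c && lt c b)]].

Definition tclos (R : rel T) : rel T :=
  fun a b => [exists c, R a c && connect R c b].

Definition graded_poset (C : {set T}) (lt : rel T) (bot top : T) (r : T -> nat) : Prop :=
  [/\ (forall a, a \in C -> ~~ lt a a),
      (forall a b c, a \in C -> b \in C -> c \in C -> lt a b -> lt b c -> lt a c),
      (bot \in C /\ top \in C),
      (forall a, a \in C -> a != bot -> lt bot a) /\ (forall a, a \in C -> a != top -> lt a top) &
      r bot = 0 /\
      forall a b, covers C lt a b -> r b = (r a).+1].

Definition same_poset (C1 : {set T}) (lt1 : rel T) (C2 : {set T}) (lt2 : rel T) : Prop :=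
  C1 = C2 /\ forall a b, a \in C1 -> b \in C1 -> lt1 a b = lt2 a b.

Definition zippable (C : {set T}) (lt : rel T) (bot top x y z : T) : Prop :=
  let ub u := [&& u \in C, lt y u & lt z u] in
  let minub u := ub u && [forall v, ub v ==> ~~ lt v u] in
  [/\ [/\ x \in C, y \in C & z \in C],
      [/\ x \notin [set bot; top], y \notin [set bot; top] & z \notin [set bot; top]],
      (y != z /\ (forall w, covers C lt w x = (w == y) || (w == z))),
      (minub x /\ (forall u, minub u -> u = x)) &
      forall w, covers C lt w y = covers C lt w z].

Definition zip_carrier (C : {set T}) (x y : T) : {set T} := C :\ x :\ y.
Definition zip_lt (C : {set T}) (lt : rel T) (x y z : T) : rel T :=
  tclos (fun a b => [&& a \in zip_carrier C x y, b \in zip_carrier C x y &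
                        lt a b || ((a == z) && lt y b)]).

(* U(P;x,y), with new elements x' y' (given by the user, fresh) *)
Definition unzip_carrier (C : {set T}) (x' y' : T) : {set T} := x' |: (y' |: C).
Definition unzip_cov (C : {set T}) (lt : rel T) (x y x' y' : T) : rel T :=
  fun a b =>
  [|| covers C lt a b && ~~ ((a == y) && (b == x)),
      (a == x') && covers C lt x b,
      covers C lt a y && (b == y'),
      (a == y') && (b == x'),
      (a == y) && (b == x') |
      (a == y') && (b == x)].
Definition unzip_lt (C : {set T}) (lt : rel T) (x y x' y' : T) : rel T :=
  tclos (unzip_cov C lt x y x' y').

(* order complex O(P): chains of P - {0^,1^} (including the empty face) *)
Definition order_complex (C : {set T}) (lt : rel T) (bot top : T) : {set {set T}} :=
  [set A : {set T} | (A \subset C :\ bot :\ top) &&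
     [forall a in A, forall b in A, [|| a == b, lt a b | lt b a]]].

Definition link (D : {set {set T}}) (F : {set T}) : {set {set T}} :=
  [set G : {set T} | [disjoint G & F] && ((G :|: F) \in D)].

Definition edge_subdivision (D : {set {set T}}) (i j v : T) : {set {set T}} :=
  let L := link D [set i; j] in
  [set F in D | ~~ ([set i; j] \subset F)]
  :|: [set v |: F | F in L]
  :|: [set i |: (v |: F) | F in L]
  :|: [set j |: (v |: F) | F in L].

Definition edge_contraction (D : {set {set T}}) (i j : T) : {set {set T}} :=
  [set F in D | i \notin F] :|: [set j |: (F :\ i) | F in [set F in D | i \in F]].

End PosetDefs.

(* Main.v *)
From Stdlib Require Import FunctionalExtensionality.
Require Import Defs.
From mathcomp Require Import all_boot.
Set Implicit Arguments. Unset Strict Implicit. Unset Printing Implicit Defensive.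

Lemma tclos_step (T : finType) (R : rel T) a b : R a b -> tclos R a b.
Proof. by move=> H; apply/existsP; exists b; rewrite H connect0. Qed.

Lemma tclos_trans (T : finType) (R : rel T) a b c :
  tclos R a b -> tclos R b c -> tclos R a c.
Proof.
move=> /existsP[d /andP[Rad Cdb]] /existsP[e /andP[Rbe Cec]].
apply/existsP; exists d; rewrite Rad /=.
apply: connect_trans Cdb _; apply: connect_trans Cec; exact: connect1.
Qed.

Lemma tclos_ind (T : finType) (R E : rel T) :
  (forall a b, R a b -> E a b) ->
  (forall a b c, E a b -> E b c -> E a c) ->
  forall a b, tclos R a b -> E a b.
Proof.
move=> HR Htr a b /existsP[d /andP[Rad /connectP[p Hp ->]]].
have := HR _ _ Rad; clear Rad.
elim: p d Hp => [|e p IH] d //= /andP[Rde Hp] Ead.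
apply: IH Hp _; exact: Htr Ead (HR _ _ Rde).
Qed.

Lemma cover_up_aux (T : finType) (C : {set T}) (lt : rel T)
  (irr : forall a, a \in C -> ~~ lt a a)
  (tr : forall a b c, a \in C -> b \in C -> c \in C -> lt a b -> lt b c -> lt a c) n :
  forall a b, #|[set d in C | lt a d && lt d b]| <= n -> a \in C -> b \in C -> lt a b ->
  exists2 c, covers C lt a c & (c == b) || lt c b.
Proof.
elim: n => [|n IH] a b Hn Ha Hb Hab.
  have [Hf|Hf] := boolP [forall c in C, ~~ (lt a c && lt c b)].
    by exists b; rewrite ?eqxx // /covers Ha Hb Hab Hf.
  move: Hf => /forall_inPn[d Hd /negPn/andP[Had Hdb]].
  have Hd' : d \in [set d in C | lt a d && lt d b] by rewrite inE Hd Had Hdb.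
  by move: Hn; rewrite leqn0 => /eqP/card0_eq/(_ d); rewrite Hd'.
have [Hf|Hf] := boolP [forall c in C, ~~ (lt a c && lt c b)].
  by exists b; rewrite ?eqxx // /covers Ha Hb Hab Hf.
move: Hf => /forall_inPn[d Hd /negPn/andP[Had Hdb]].
have Hlt : #|[set e in C | lt a e && lt e d]| < #|[set d in C | lt a d && lt d b]|.
  apply: proper_card; apply/properP; split.
    apply/subsetP => e; rewrite !inE => /and3P[He Hae Hed].
    by rewrite He Hae (tr _ _ _ He Hd Hb Hed Hdb).
  by exists d; rewrite !inE ?Hd ?Had ?Hdb // (negbTE (irr _ Hd)) andbF.
have [c Hc Hcd] := IH a d (leq_trans Hlt Hn) Ha Hd Had.
exists c => //; apply/orP; right.
have Hc' : c \in C by case/and4P: Hc.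
case/orP: Hcd => [/eqP->//|Hcd]; exact: tr _ _ _ Hc' Hd Hb Hcd Hdb.
Qed.

Lemma covers_dual (T : finType) (C : {set T}) (lt : rel T) a b :
  covers C (fun u v => lt v u) b a = covers C lt a b.
Proof.
rewrite /covers; case: (a \in C); case: (b \in C) => //=; case: (lt a b) => //=.
apply: eq_forallb => c; case: (c \in C) => //=; by rewrite andbC.
Qed.

Lemma cover_up (T : finType) (C : {set T}) (lt : rel T)
  (irr : forall a, a \in C -> ~~ lt a a)
  (tr : forall a b c, a \in C -> b \in C -> c \in C -> lt a b -> lt b c -> lt a c) a b :
  a \in C -> b \in C -> lt a b ->
  exists2 c, covers C lt a c & (c == b) || lt c b.
Proof. exact: cover_up_aux irr tr _ a b (leqnn _). Qed.

Lemma cover_down (T : finType) (C : {set T}) (lt : rel T)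
  (irr : forall a, a \in C -> ~~ lt a a)
  (tr : forall a b c, a \in C -> b \in C -> c \in C -> lt a b -> lt b c -> lt a c) a b :
  a \in C -> b \in C -> lt a b ->
  exists2 c, covers C lt c b & (c == a) || lt a c.
Proof.
move=> Ha Hb Hab.
have irr' : forall a, a \in C -> ~~ (fun u v => lt v u) a a by [].
have tr' : forall a b c, a \in C -> b \in C -> c \in C ->
   (fun u v => lt v u) a b -> (fun u v => lt v u) b c -> (fun u v => lt v u) a c.
  by move=> u v w Hu Hv Hw /= H1 H2; exact: tr H2 H1.
have [c Hc Hcb] := cover_up irr' tr' Hb Ha Hab.
by exists c => //; rewrite -covers_dual.
Qed.


Lemma chainP (T : finType) (lt : rel T) (A : {set T}) :
  reflect (forall a b, a \in A -> b \in A -> [|| a == b, lt a b | lt b a])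
          [forall a in A, forall b in A, [|| a == b, lt a b | lt b a]].
Proof.
apply: (iffP forall_inP) => H a.
  by move=> b Ha Hb; move/forall_inP: (H a Ha); apply.
by move=> Ha; apply/forall_inP => b Hb; apply: H.
Qed.

Lemma in_ocP (T : finType) (C : {set T}) (lt : rel T) bot top (A : {set T}) :
  reflect (A \subset C :\ bot :\ top /\
           forall a b, a \in A -> b \in A -> [|| a == b, lt a b | lt b a])
    (A \in order_complex C lt bot top).
Proof.
rewrite inE; apply: (iffP andP) => [[H1 /chainP H2]|[H1 H2]]; split => //.
exact/chainP.
Qed.

Lemma in_contrP (T : finType) (D : {set {set T}}) i j (A : {set T}) :
  reflect ((A \in D /\ i \notin A) \/ exists2 F, (F \in D /\ i \in F) & A = j |: (F :\ i))
    (A \in edge_contraction D i j).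
Proof.
rewrite /edge_contraction inE; apply: (iffP orP).
  case=> [|/imsetP[F]]; rewrite inE.
    by case/andP => H1 H2; left.
  by case/andP => H1 H2 ->; right; exists F.
case=> [[H1 H2]|[F [H1 H2] ->]]; [left|right]; first by rewrite inE H1.
by apply/imsetP; exists F; rewrite // inE H1.
Qed.


Definition EU (T : finType) (C : {set T}) (lt : rel T) (x y x' y' : T) : rel T :=
  fun a b =>
 [|| [&& a \in C, b \in C, lt a b & ~~ ((a == y) && (b == x))],
     (b == x') && [|| a == y, a == y' | (a \in C) && lt a y],
     (a == x') && ((b \in C) && lt x b),
     (b == y') && ((a \in C) && lt a y) |
     (a == y') && [|| b == x', b == x | (b \in C) && lt x b] ].

Ltac kill irr :=
  match goal with
  | H : is_true (?u != ?u) |- _ => by rewrite eqxx in H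
  | H : is_true (?r ?u ?u), H2 : is_true (?u \in _) |- _ => by move: (irr _ H2); rewrite H
  | H : is_true (?u \in ?S), H' : is_true (?u \notin ?S) |- _ => by rewrite H in H'
  | H : ?u = ?v, H' : is_true (?u != ?v) |- _ => by rewrite H eqxx in H'
  | H : ?u = ?v, H' : is_true (?v != ?u) |- _ => by rewrite H eqxx in H'
  | H : ?u = ?v, H1 : is_true (?u \in ?S), H2 : is_true (?v \notin ?S) |- _ =>
      by rewrite -H H1 in H2
  | H : ?u = ?v, H1 : is_true (?v \in ?S), H2 : is_true (?u \notin ?S) |- _ =>
      by rewrite H H1 in H2
  end.

Lemma EU_trans (T : finType) (C : {set T}) (lt : rel T)
  (irr : forall a, a \in C -> ~~ lt a a)
  (tr : forall a b c, a \in C -> b \in C -> c \in C -> lt a b -> lt b c -> lt a c)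
  x y x' y' :
  x \in C -> y \in C -> covers C lt y x -> x' \notin C -> y' \notin C -> x' != y' ->
  forall a b c, EU C lt x y x' y' a b -> EU C lt x y x' y' b c -> EU C lt x y x' y' a c.
Proof.
move=> Hx Hy cyx Hx' Hy' Nxy' a b c.
have lyx : lt y x by case/and4P: cyx.
have nxy : ~~ lt x y.
  by apply/negP => H; move: (irr _ Hx); rewrite (tr _ _ _ Hx Hy Hx H lyx).
case/orP => [/and4P[Ha Hb Hab Nab] | /orP[/andP[/eqP Eb /or3P[/eqP Ea|/eqP Ea|/andP[Ha Hay]]]
  | /orP[/andP[/eqP Ea /andP[Hb Hxb]] | /orP[/andP[/eqP Eb /andP[Ha Hay]]
  | /andP[/eqP Ea /or3P[/eqP Eb|/eqP Eb|/andP[Hb Hxb]]]]]]];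
case/orP => [/and4P[Hb' Hc Hbc Nbc] | /orP[/andP[/eqP Ec /or3P[/eqP Eb'|/eqP Eb'|/andP[Hb' Hby]]]
  | /orP[/andP[/eqP Eb' /andP[Hc Hxc]] | /orP[/andP[/eqP Ec /andP[Hb' Hby]]
  | /andP[/eqP Eb' /or3P[/eqP Ec|/eqP Ec|/andP[Hc Hxc]]]]]]];
subst; try kill irr.

- rewrite /EU; apply/orP; left; rewrite Ha Hc (tr _ _ _ Ha Hb Hc Hab Hbc) /=.
  apply/negP => /andP[/eqP Ea /eqP Ec]; subst.
  by case/and4P: cyx => _ _ _ /forall_inP/(_ b Hb); rewrite Hab Hbc.
- by rewrite /EU eqxx Ha Hab !orbT.
- by rewrite /EU eqxx Ha (tr _ _ _ Ha Hb Hy Hab Hby) !orbT.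
- by rewrite /EU eqxx Ha (tr _ _ _ Ha Hb Hy Hab Hby) !orbT.
- rewrite /EU; apply/orP; left; rewrite Hy Hc (tr _ _ _ Hy Hx Hc lyx Hxc) eqxx /=.
  by apply/eqP => E; subst; move: (irr _ Hx); rewrite Hxc.
- by rewrite /EU eqxx Hc Hxc !orbT.
- rewrite /EU; apply/orP; left; rewrite Ha Hc (tr _ _ _ Ha Hx Hc (tr _ _ _ Ha Hy Hx Hay lyx) Hxc) /=.
  by apply/negP => /andP[/eqP E _]; subst; move: (irr _ Ha); rewrite Hay.
- by rewrite /EU eqxx Hc (tr _ _ _ Hx Hb Hc Hxb Hbc) !orbT.
- by move: nxy; rewrite Hxb.
- by move: nxy; rewrite (tr _ _ _ Hx Hb Hy Hxb Hby).
- by move: nxy; rewrite (tr _ _ _ Hx Hb Hy Hxb Hby).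
- by rewrite /EU eqxx Ha Hay !orbT.
- by rewrite /EU eqxx Ha Hay !orbT.
- rewrite /EU; apply/orP; left; rewrite Ha Hx (tr _ _ _ Ha Hy Hx Hay lyx) /=.
  by apply/negP => /andP[/eqP E _]; subst; move: (irr _ Ha); rewrite Hay.
- rewrite /EU; apply/orP; left; rewrite Ha Hc (tr _ _ _ Ha Hx Hc (tr _ _ _ Ha Hy Hx Hay lyx) Hxc) /=.
  by apply/negP => /andP[/eqP E _]; subst; move: (irr _ Ha); rewrite Hay.
- by rewrite /EU eqxx Hc Hxc !orbT.
- by rewrite /EU eqxx Hc Hbc !orbT.
- by move: nxy; rewrite Hby.
- by move: nxy; rewrite Hby.
- by rewrite /EU eqxx Hc (tr _ _ _ Hx Hb Hc Hxb Hbc) !orbT.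
- by move: nxy; rewrite Hxb.
- by move: nxy; rewrite (tr _ _ _ Hx Hb Hy Hxb Hby).
- by move: nxy; rewrite (tr _ _ _ Hx Hb Hy Hxb Hby).
Qed.

Lemma count_lt (T : finType) (C : {set T}) (lt : rel T)
  (irr : forall a, a \in C -> ~~ lt a a)
  (tr : forall a b c, a \in C -> b \in C -> c \in C -> lt a b -> lt b c -> lt a c) a b c :
  a \in C -> b \in C -> c \in C -> lt a c -> lt c b ->
  #|[set d in C | lt c d && lt d b]| < #|[set d in C | lt a d && lt d b]|.
Proof.
move=> Ha Hb Hc Hac Hcb; apply: proper_card; apply/properP; split.
  apply/subsetP => e; rewrite !inE => /and3P[He Hce Heb].
  by rewrite He (tr _ _ _ Ha Hc He Hac Hce) Heb.
by exists c; rewrite !inE ?Hc ?Hac ?Hcb // (negbTE (irr _ Hc)).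
Qed.

Lemma unzipE (T : finType) (C : {set T}) (lt : rel T)
  (irr : forall a, a \in C -> ~~ lt a a)
  (tr : forall a b c, a \in C -> b \in C -> c \in C -> lt a b -> lt b c -> lt a c)
  x y x' y' :
  x \in C -> y \in C -> covers C lt y x -> x' \notin C -> y' \notin C -> x' != y' ->
  forall a b, unzip_lt C lt x y x' y' a b = EU C lt x y x' y' a b.
Proof.
move=> Hx Hy cyx Hx' Hy' Nxy' a b.
have lyx : lt y x by case/and4P: cyx.
have nxy : ~~ lt x y.
  by apply/negP => H; move: (irr _ Hx); rewrite (tr _ _ _ Hx Hy Hx H lyx).
have Nyx : (y == x) = false.
  by apply/negbTE/eqP => E; move: (irr _ Hy); rewrite {2}E lyx.
pose cov := unzip_cov C lt x y x' y'.
have st : forall u v, cov u v -> unzip_lt C lt x y x' y' u v by move=> u v; apply: tclos_step.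
have ttr : forall u v w, unzip_lt C lt x y x' y' u v -> unzip_lt C lt x y x' y' v w ->
   unzip_lt C lt x y x' y' u w by move=> u v w; apply: tclos_trans.
have Cpart_aux : forall n u v, #|[set d in C | lt u d && lt d v]| <= n ->
    u \in C -> v \in C -> lt u v -> ~~ ((u == y) && (v == x)) ->
    unzip_lt C lt x y x' y' u v.
  elim=> [|n IH] u v Hn Hu Hv Huv Nuv;
  have [c Hc Hcv] := cover_up irr tr Hu Hv Huv;
  have HcC : c \in C by case/and4P: Hc.
  - case/orP: Hcv => [/eqP E|Hcv]; first by subst c; apply: st; rewrite /cov /unzip_cov Hc Nuv.
    have Huc : lt u c by case/and4P: Hc.
    move: Hn; rewrite leqn0 => /eqP/card0_eq/(_ c); rewrite !inE HcC Huc Hcv.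
    by [].
  case/orP: Hcv => [/eqP E|Hcv]; first by subst c; apply: st; rewrite /cov /unzip_cov Hc Nuv.
  have Huc : lt u c by case/and4P: Hc.
  have Hlt := count_lt irr tr Hu Hv HcC Huc Hcv.
  have Hn' : #|[set d in C | lt c d && lt d v]| <= n by rewrite -ltnS; apply: leq_trans Hlt Hn.
  case: (boolP ((u == y) && (c == x))) => [/andP[/eqP Eu /eqP Ec]|Nuc].
    subst u c.
    have [w Hw Hwv] := cover_up irr tr Hx Hv Hcv.
    have HwC : w \in C by case/and4P: Hw.
    have Hyx' : unzip_lt C lt x y x' y' y w.
      apply: (ttr _ x'); apply: st; rewrite /cov /unzip_cov ?eqxx ?Hw ?orbT //.
    case/orP: Hwv => [/eqP<-//|Hwv].
    apply: ttr Hyx' _.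
    have Hxw : lt x w by case/and4P: Hw.
    have Hyw : lt y w by exact: tr Hy Hx HwC lyx Hxw.
    apply: (IH w v) => //.
      rewrite -ltnS; apply: leq_trans _ Hn; have H := count_lt irr tr Hy Hv HwC Hyw Hwv; exact: H.
    by apply/negP => /andP[_ /eqP E]; subst v; move: (irr _ Hx); rewrite (tr _ _ _ Hx HwC Hx Hxw Hwv).
  have Huc' : unzip_lt C lt x y x' y' u c by apply: st; rewrite /cov /unzip_cov Hc Nuc.
  case: (boolP ((c == y) && (v == x))) => [/andP[/eqP Ec /eqP Ev]|Ncv].
    subst c v; apply: (ttr _ y'); apply: st; rewrite /cov /unzip_cov ?eqxx ?Hc ?orbT //.
  exact: ttr Huc' (IH c v Hn' HcC Hv Hcv Ncv).
have Cpart : forall u v, u \in C -> v \in C -> lt u v -> ~~ ((u == y) && (v == x)) ->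
    unzip_lt C lt x y x' y' u v.
  by move=> u v; apply: Cpart_aux (leqnn _).
have belowy : forall u, u \in C -> lt u y -> unzip_lt C lt x y x' y' u y'.
  move=> u Hu Huy.
  have [d Hd Hud] := cover_down irr tr Hu Hy Huy.
  have HdC : d \in C by case/and4P: Hd.
  have Hdy' : unzip_lt C lt x y x' y' d y'.
    by apply: st; rewrite /cov /unzip_cov Hd eqxx !orbT.
  case/orP: Hud => [/eqP<-//|Hud].
  apply: ttr Hdy'; apply: Cpart => //.
  apply/negP => /andP[_ /eqP E]; subst d.
  by case/and4P: Hd => _ _ H _; rewrite H in nxy.
apply/idP/idP.
  apply: tclos_ind; last by move=> u v w; apply: EU_trans.
  move=> u v; rewrite /unzip_cov.
  case/orP => [/andP[/and4P[Hu Hv Huv _] N]|/orP[/andP[/eqP-> /and4P[_ Hv Hxv _]]|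
    /orP[/andP[/and4P[Hu _ Huy _] /eqP->]|/orP[/andP[/eqP-> /eqP->]|
    /orP[/andP[/eqP-> /eqP->]|/andP[/eqP-> /eqP->]]]]]].
  - by rewrite /EU Hu Hv Huv N.
  - by rewrite /EU eqxx Hv Hxv !orbT.
  - by rewrite /EU eqxx Hu Huy !orbT.
  - by rewrite /EU !eqxx !orbT.
  - by rewrite /EU !eqxx !orbT.
  - by rewrite /EU !eqxx !orbT.
case/orP => [/and4P[Ha Hb Hab Nab] | /orP[/andP[/eqP-> /or3P[/eqP->|/eqP->|/andP[Ha Hay]]]
  | /orP[/andP[/eqP-> /andP[Hb Hxb]] | /orP[/andP[/eqP-> /andP[Ha Hay]]
  | /andP[/eqP-> /or3P[/eqP->|/eqP->|/andP[Hb Hxb]]]]]]].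
- exact: Cpart.
- by apply: st; rewrite /cov /unzip_cov !eqxx !orbT.
- by apply: st; rewrite /cov /unzip_cov !eqxx !orbT.
- apply: ttr (belowy a Ha Hay) _.
  by apply: st; rewrite /cov /unzip_cov !eqxx !orbT.
- have [w Hw Hwb] := cover_up irr tr Hx Hb Hxb.
  have HwC : w \in C by case/and4P: Hw.
  have Hx'w : unzip_lt C lt x y x' y' x' w by apply: st; rewrite /cov /unzip_cov eqxx Hw orbT.
  case/orP: Hwb => [/eqP<-//|Hwb]; apply: ttr Hx'w _; apply: Cpart => //.
  apply/negP => /andP[_ /eqP E]; subst b; move: (irr _ Hx).
  by case/and4P: Hw => _ _ H _; rewrite (tr _ _ _ Hx HwC Hx H Hwb).
- exact: belowy.
- by apply: st; rewrite /cov /unzip_cov !eqxx !orbT.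
- by apply: st; rewrite /cov /unzip_cov !eqxx !orbT.
- apply: (ttr _ x); first by apply: st; rewrite /cov /unzip_cov !eqxx !orbT.
  by apply: Cpart => //; rewrite eq_sym Nyx.
Qed.


Lemma in_linkP (T : finType) (D : {set {set T}}) (S F : {set T}) :
  reflect ([disjoint F & S] /\ F :|: S \in D) (F \in link D S).
Proof. by rewrite inE; apply: (iffP andP). Qed.

Lemma in_subdivP (T : finType) (D : {set {set T}}) i j v (A : {set T}) :
  reflect ((A \in D /\ ~~ ([set i; j] \subset A)) \/
           exists2 F, F \in link D [set i; j] &
             [\/ A = v |: F, A = i |: (v |: F) | A = j |: (v |: F)])
    (A \in edge_subdivision D i j v).
Proof.
rewrite /edge_subdivision !inE; apply: (iffP idP).
  case/orP => [/orP[/orP[/andP[H1 H2]|/imsetP[F HF ->]]|/imsetP[F HF ->]]|/imsetP[F HF ->]].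
  - by left.
  - by right; exists F => //; constructor 1.
  - by right; exists F => //; constructor 2.
  - by right; exists F => //; constructor 3.
case=> [[H1 H2]|[F HF [->|->|->]]].
- by rewrite H1 H2.
- by rewrite (imset_f (fun F => v |: F) HF) !orbT.
- by rewrite (imset_f (fun F => i |: (v |: F)) HF) !orbT.
- by rewrite (imset_f (fun F => j |: (v |: F)) HF) !orbT.
Qed.


Lemma part2 (T : finType) (C : {set T}) (lt : rel T) bot top
  (irr : forall a, a \in C -> ~~ lt a a)
  (tr : forall a b c, a \in C -> b \in C -> c \in C -> lt a b -> lt b c -> lt a c)
  x y z :
  zippable C lt bot top x y z ->
  order_complex (zip_carrier C x y) (zip_lt C lt x y z) bot top =
  edge_contraction (edge_contraction (order_complex C lt bot top) y x) x z.
Proof.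
case=> [[Hx Hy Hz] [Hxb Hyb Hzb] [Hyz Hcx] _ Hcyz].
have cyx : covers C lt y x by rewrite Hcx eqxx.
have czx : covers C lt z x by rewrite Hcx eqxx orbT.
have lyx : lt y x by case/and4P: cyx.
have lzx : lt z x by case/and4P: czx.
have nyz : ~~ lt y z.
  apply/negP => H; case/and4P: cyx => _ _ _ /forall_inP/(_ z Hz).
  by rewrite H lzx.
have bel : forall c, c \in C -> lt c y = lt c z.
  suff H : forall u v, u \in C -> v \in C ->
     (forall w, covers C lt w u = covers C lt w v) ->
     forall c, c \in C -> lt c u -> lt c v.
    move=> c Hc; apply/idP/idP; first exact: H.
    by apply: H => // w; rewrite Hcyz.
  move=> u v Hu Hv Huv c Hc Hcu.
  have [d Hd Hcd] := cover_down irr tr Hc Hu Hcu.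
  have Hd' : d \in C by case/and4P: Hd.
  have ldv : lt d v by rewrite Huv in Hd; case/and4P: Hd.
  by case/orP: Hcd => [/eqP<-//|Hcd]; exact: tr Hcd ldv.
have belx : forall c, c \in C -> lt c x -> (c == y) || (c == z) || lt c z.
  move=> c Hc Hcx'.
  have [d Hd Hcd] := cover_down irr tr Hc Hx Hcx'.
  move: Hd; rewrite Hcx => /orP[]/eqP Ed; subst d.
    case/orP: Hcd => [/eqP->|H]; first by rewrite eqxx.
    by rewrite -bel // H !orbT.
  by case/orP: Hcd => [/eqP->|->]; rewrite ?eqxx ?orbT.
have Nxy : x != y by apply/eqP => E; move: (irr _ Hy); rewrite -{2}E lyx.
have Nxz : x != z by apply/eqP => E; move: (irr _ Hz); rewrite -{2}E lzx.
set C' := zip_carrier C x y.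
have inC' : forall c, c \in C' = [&& c != y, c != x & c \in C].
  by move=> c; rewrite !inE.
pose EZ a b := [&& a \in C', b \in C' & lt a b || ((a == z) || lt a z) && lt y b].
have zipE : forall a b, zip_lt C lt x y z a b = EZ a b.
  move=> a b; apply/idP/idP.
    apply: tclos_ind => {a b}.
      move=> a b /and3P[Ha Hb H]; rewrite /EZ Ha Hb /=.
      by case/orP: H => [->//|/andP[-> ->]]; rewrite orbT.
    move=> a b c /and3P[Ha Hb H1] /and3P[_ Hc H2]; rewrite /EZ Ha Hc /=.
    move: Ha Hb Hc; rewrite !inC' => /and3P[_ _ Ha] /and3P[_ _ Hb] /and3P[_ _ Hc].
    case/orP: H1 => [H1|/andP[H1 H1']]; case/orP: H2 => [H2|/andP[H2 H2']].
    - by rewrite (tr _ _ _ Ha Hb Hc H1 H2).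
    - case/orP: H2 => [/eqP E|H2]; first by subst b; rewrite H1 H2' !(orbT, andbT).
      by rewrite (tr _ _ _ Ha Hb Hz H1 H2) H2' !(orbT, andbT).
    - by rewrite H1 (tr _ _ _ Hy Hb Hc H1' H2) orbT.
    - case/orP: H2 => [/eqP E|H2]; first by subst b; rewrite H1' in nyz.
      by rewrite (tr _ _ _ Hy Hb Hz H1' H2) in nyz.
  case/and3P => Ha Hb /orP[H|/andP[/orP[/eqP E|H1] H2]].
  - by apply: tclos_step; rewrite /= Ha Hb H.
  - by apply: tclos_step; rewrite /= Ha Hb E eqxx H2 orbT.
  - have HzC : z \in C' by rewrite inC' eq_sym Hyz eq_sym Nxz Hz.
    apply: (@tclos_trans _ _ _ z); apply: tclos_step; rewrite /= ?Ha ?Hb HzC ?H1 //.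
    by rewrite eqxx H2 orbT.
have HzC' : z \in C' by rewrite inC' eq_sym Hyz eq_sym Nxz Hz.
have HzC'' : z \in C :\ bot :\ top.
  by move: Hzb; rewrite !inE negb_or => /andP[-> ->].
have back : forall H : {set T}, H \subset C :\ bot :\ top -> x \notin H -> y \notin H ->
    (forall a b, a \in H -> b \in H -> [|| a == b, lt a b | lt b a]) ->
    (forall c, c \in H -> [|| c == z, lt c z, lt z c | lt y c]) ->
    z |: H \in order_complex C' (zip_lt C lt x y z) bot top.
  move=> H Hsub HxH HyH Hch Hc; apply/in_ocP; split.
    apply/subsetP => e; rewrite in_setU1 => /orP[/eqP->|He].
      by rewrite 2!in_setD1 HzC' andbT; move: Hzb; rewrite !inE negb_or => /andP[-> ->].
    move/subsetP: Hsub => /(_ e He) /setD1P[Ht /setD1P[Hb HeC]]; apply/setD1P; split => //; apply/setD1P; split => //; rewrite inC' HeC andbT.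
    by apply/andP; split; apply/eqP => E; subst e;
      [rewrite He in HyH|rewrite He in HxH].
  have inH : forall e, e \in H -> e \in C'.
    move=> e He; move/subsetP: Hsub => /(_ e He); rewrite !inE => /and3P[_ _ ->].
    by rewrite andbT; apply/andP; split; apply/eqP => E; subst e;
      [rewrite He in HyH|rewrite He in HxH].
  move=> a b; rewrite !in_setU1 !zipE /EZ.
  case/orP => [/eqP->|Ha]; case/orP => [/eqP->|Hb]; rewrite ?eqxx ?HzC' ?inH //=;
  first [ by case/or4P: (Hc b Hb) => [/eqP->|->|->|->]; rewrite ?eqxx ?orbT
        | by case/or4P: (Hc a Ha) => [/eqP->|->|->|->]; rewrite ?eqxx ?orbT
        | by case/or3P: (Hch a b Ha Hb) => [->|->|->]; rewrite ?orbT ].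
apply/setP => A; apply/in_ocP/in_contrP.
  case=> Hsub Hch.
  have HinA : forall a, a \in A -> [&& a \in C', a != bot & a != top].
    by move=> a Ha; move/subsetP: Hsub => /(_ a Ha); rewrite !inE => /and3P[-> -> ->].
  have HxA : x \notin A.
    by apply/negP => /HinA; rewrite inC' eqxx andbF.
  have HyA : y \notin A.
    by apply/negP => /HinA; rewrite inC' eqxx.
  have HAC : forall a, a \in A -> a \in C.
    by move=> a /HinA; rewrite inC' => /and3P[/and3P[_ _ ->]].
  have HsubC : A \subset C :\ bot :\ top.
    apply/subsetP => a Ha; move: (HinA a Ha) (HAC a Ha); rewrite !inE.
    by case/and3P => _ -> -> ->.
  have Hch' : forall a b, a \in A -> b \in A -> [|| a == b, EZ a b | EZ b a].
    by move=> a b Ha Hb; rewrite -!zipE; apply: Hch.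
  case: (boolP [forall a in A, forall b in A, [|| a == b, lt a b | lt b a]]) => [/chainP HP|].
    left; split => //; apply/in_contrP; left; split => //; exact/in_ocP.
  move/forall_inPn => [a Ha /forall_inPn [b Hb]]; rewrite !negb_or => /and3P[Nab Nlab Nlba].
  have key : forall a b, a \in A -> b \in A -> ~~ lt a b -> EZ a b ->
     (A \in edge_contraction (order_complex C lt bot top) y x /\ x \notin A) \/
     (exists2 F, F \in edge_contraction (order_complex C lt bot top) y x /\ x \in F
        & A = z |: (F :\ x)).
    clear a b Ha Hb Nab Nlab Nlba; move=> a b Ha Hb Nlab /and3P[_ _ /orP[H|/andP[Haz Hyb2]]].
      by rewrite H in Nlab.
    have Eaz : a = z.
      case/orP: Haz => [/eqP//|Haz].
      by rewrite (tr _ _ _ (HAC a Ha) Hy (HAC b Hb) _ Hyb2) ?bel ?HAC in Nlab.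
    subst a.
    have claim : forall c, c \in A -> c != z -> lt c y || lt y c.
      move=> c Hc Ncz.
      case/or3P: (Hch' c z Hc Ha) => [/eqP E|/and3P[_ _ H]|/and3P[_ _ H]].
      - by rewrite E eqxx in Ncz.
      - case/orP: H => [H|/andP[_ H]]; last by rewrite H in nyz.
        by rewrite bel ?HAC ?H.
      - case/orP: H => [H|/andP[_ ->]]; last by rewrite orbT.
        case/or3P: (Hch' c b Hc Hb) => [/eqP E|/and3P[_ _ H']|/and3P[_ _ H']].
        + by subst c; rewrite Hyb2 orbT.
        + case/orP: H' => [H'|/andP[/orP[/eqP E|H''] _]].
          * by rewrite (tr _ _ _ Hz (HAC c Hc) (HAC b Hb) H H') in Nlab.
          * by rewrite E eqxx in Ncz.
          * by move: (irr _ Hz); rewrite (tr _ _ _ Hz (HAC c Hc) Hz H H'').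
        + case/orP: H' => [H'|/andP[_ ->]]; last by rewrite orbT.
          by rewrite (tr _ _ _ Hy (HAC b Hb) (HAC c Hc) Hyb2 H') orbT.
    right; exists (x |: ((y |: (A :\ z)) :\ y)).
      split; last by rewrite setU11.
      apply/in_contrP; right; exists (y |: (A :\ z)) => //; split; last by rewrite setU11.
      apply/in_ocP; split.
        apply/subsetP => e; rewrite in_setU1 => /orP[/eqP->|].
          by move: Hyb Hy; rewrite !inE negb_or => /andP[-> ->] ->.
        by rewrite in_setD1 => /andP[_ He]; move/subsetP: HsubC; apply.
      move=> c d; rewrite !in_setU1 !in_setD1.
      case/orP => [/eqP->|/andP[Ncz Hc]]; case/orP => [/eqP->|/andP[Ndz Hd]];
        rewrite ?eqxx //.
      - by case/orP: (claim d Hd Ndz) => ->; rewrite ?orbT.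
      - by case/orP: (claim c Hc Ncz) => ->; rewrite ?orbT.
      - case/or3P: (Hch' c d Hc Hd) => [->//|/and3P[_ _ H]|/and3P[_ _ H]].
        + case/orP: H => [->|/andP[/orP[/eqP E|H] H']]; rewrite ?orbT //.
            by rewrite E eqxx in Ncz.
          by rewrite (tr _ _ _ (HAC c Hc) Hy (HAC d Hd) _ H') ?orbT // bel ?HAC.
        + case/orP: H => [->|/andP[/orP[/eqP E|H] H']]; rewrite ?orbT //.
            by rewrite E eqxx in Ndz.
          by rewrite (tr _ _ _ (HAC d Hd) Hy (HAC c Hc) _ H') ?orbT // bel ?HAC.
    apply/setP => e; rewrite !inE.
    case: (eqVneq e z) => [->|Nez] //=.
    case: (eqVneq e x) => [->|Nex] /=; first by rewrite (negbTE HxA).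
    by case: (eqVneq e y) => [->|Ney] /=; first by rewrite (negbTE HyA).
  case/or3P: (Hch' a b Ha Hb) => [/eqP E|H|H]; first by rewrite E eqxx in Nab.
    exact: key H.
  exact: key H.
case=> [[/in_contrP[[HAD HyA]|[F _ EA]] HxA]|[G [/in_contrP HG HxG] ->]].
- case/in_ocP: HAD => Hsub Hch.
  have inA : forall e, e \in A -> e \in C'.
    move=> e He; move/subsetP: Hsub => /(_ e He) /setD1P[_ /setD1P[_ HeC]].
    rewrite inC' HeC andbT; apply/andP; split; apply/eqP => E; subst e;
      [by rewrite He in HyA|by rewrite He in HxA].
  split.
    apply/subsetP => e He; move/subsetP: Hsub => /(_ e He) /setD1P[Ht /setD1P[Hb HeC]].
    by apply/setD1P; split => //; apply/setD1P; split => //; apply: inA.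
  move=> a b Ha Hb; rewrite !zipE /EZ (inA a Ha) (inA b Hb) /=.
  by case/or3P: (Hch a b Ha Hb) => [->|->|->]; rewrite ?orbT.
- by rewrite EA setU11 in HxA.
- case: HG => [[/in_ocP[Hsub Hch] HyG]|[F [/in_ocP[Hsub Hch] HyF] EG]].
  + apply/in_ocP; apply: back.
    * by apply: subset_trans Hsub; apply: subD1set.
    * by rewrite setD11.
    * by rewrite in_setD1 (negbTE HyG) andbF.
    * by move=> a b; rewrite !in_setD1 => /andP[_ Ha] /andP[_ Hb]; apply: Hch.
    * move=> c; rewrite in_setD1 => /andP[Ncx Hc].
      have HcC : c \in C by move/subsetP: Hsub => /(_ c Hc); rewrite !inE => /and3P[_ _ ->].
      case/or3P: (Hch c x Hc HxG) => [/eqP E|H|H]; first by rewrite E eqxx in Ncx.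
        case/orP: (belx c HcC H) => [/orP[/eqP E|->]|->]; rewrite ?orbT //.
        by subst c; rewrite Hc in HyG.
      by rewrite (tr _ _ _ Hz Hx HcC lzx H) !orbT.
  + subst G.
    have -> : (x |: (F :\ y)) :\ x = F :\ y :\ x.
      by apply/setP => e; rewrite !inE; case: (eqVneq e x).
    apply/in_ocP; apply: back.
    * by apply: subset_trans Hsub; apply: subset_trans (subD1set _ _) (subD1set _ _).
    * by rewrite setD11.
    * by rewrite !in_setD1 eqxx andbF.
    * move=> a b; rewrite !in_setD1 => /andP[_ /andP[_ Ha]] /andP[_ /andP[_ Hb]].
      exact: Hch.
    * move=> c; rewrite !in_setD1 => /andP[_ /andP[Ncy Hc]].
      have HcC : c \in C by move/subsetP: Hsub => /(_ c Hc) /setD1P[_ /setD1P[_ ->]].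
      case/or3P: (Hch c y Hc HyF) => [/eqP E|H|->]; first by rewrite E eqxx in Ncy.
        by rewrite -bel // H orbT.
      by rewrite !orbT.
Qed.

Definition good (T : finType) (C : {set T}) (lt : rel T) bot top x y (F : {set T}) :=
  [/\ F \subset C :\ bot :\ top,
      (forall a b, a \in F -> b \in F -> [|| a == b, lt a b | lt b a]) &
      (forall c, c \in F -> lt c y || lt x c)].

Lemma linkE (T : finType) (C : {set T}) (lt : rel T) bot top
  (irr : forall a, a \in C -> ~~ lt a a)
  (tr : forall a b c, a \in C -> b \in C -> c \in C -> lt a b -> lt b c -> lt a c)
  x y : x \in C -> y \in C -> x \notin [set bot; top] -> y \notin [set bot; top] ->
  covers C lt y x -> forall F,
  F \in link (order_complex C lt bot top) [set x; y] <-> good C lt bot top x y F.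
Proof.
move=> Hx Hy Hxb Hyb cyx F.
have lyx : lt y x by case/and4P: cyx.
have nxy : ~~ lt x y.
  by apply/negP => H; move: (irr _ Hx); rewrite (tr _ _ _ Hx Hy Hx H lyx).
have HxS : x \in C :\ bot :\ top by move: Hxb; rewrite !inE negb_or Hx => /andP[-> ->].
have HyS : y \in C :\ bot :\ top by move: Hyb; rewrite !inE negb_or Hy => /andP[-> ->].
split.
  case/in_linkP => Hdis /in_ocP[Hsub Hch].
  have HFsub : F \subset C :\ bot :\ top.
    by apply: subset_trans Hsub; apply: subsetUl.
  have HFC : forall c, c \in F -> c \in C.
    by move=> c Hc; move/subsetP: HFsub => /(_ c Hc) /setD1P[_ /setD1P[_ ->]].
  split => //.
    by move=> a b Ha Hb; apply: Hch; rewrite inE ?Ha ?Hb.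
  move=> c Hc.
  have Ncx : (c == x) = false.
    by apply/negbTE/eqP => E; subst c; move: (disjointFr Hdis Hc); rewrite !inE eqxx.
  have Ncy : (c == y) = false.
    by apply/negbTE/eqP => E; subst c; move: (disjointFr Hdis Hc); rewrite !inE eqxx orbT.
  have HxU : x \in F :|: [set x; y] by rewrite !inE eqxx orbT.
  have HyU : y \in F :|: [set x; y] by rewrite !inE eqxx !orbT.
  have HcU : c \in F :|: [set x; y] by rewrite inE Hc.
  case/or3P: (Hch c y HcU HyU) => [|->//|Hyc]; first by rewrite Ncy.
  case/or3P: (Hch c x HcU HxU) => [|Hcx|->]; first by rewrite Ncx.
    by case/and4P: cyx => _ _ _ /forall_inP/(_ c (HFC c Hc)); rewrite Hyc Hcx.
  by rewrite orbT.
case=> Hsub Hch Hc.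
have HFC : forall c, c \in F -> c \in C.
  by move=> c Hc'; move/subsetP: Hsub => /(_ c Hc') /setD1P[_ /setD1P[_ ->]].
have HxF : x \notin F.
  by apply/negP => /Hc; rewrite (negbTE nxy) (negbTE (irr _ Hx)).
have HyF : y \notin F.
  by apply/negP => /Hc; rewrite (negbTE nxy) (negbTE (irr _ Hy)).
apply/in_linkP; split.
  rewrite disjoint_subset; apply/subsetP => e He; rewrite !inE negb_or.
  by apply/andP; split; apply/eqP => E; subst e; [rewrite He in HxF|rewrite He in HyF].
apply/in_ocP; split.
  apply/subsetP => e; rewrite in_setU => /orP[He|]; first by move/subsetP: Hsub; apply.
  by rewrite in_set2 => /orP[/eqP->|/eqP->].
have Hcx : forall c, c \in F -> lt c x || lt x c.
  move=> c Hc'; case/orP: (Hc c Hc') => [H|->]; last by rewrite orbT.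
  by rewrite (tr _ _ _ (HFC c Hc') Hy Hx H lyx).
have Hcy : forall c, c \in F -> lt c y || lt y c.
  move=> c Hc'; case/orP: (Hc c Hc') => [->//|H].
  by rewrite (tr _ _ _ Hy Hx (HFC c Hc') lyx H) orbT.
move=> a b; rewrite !inE => /orP[Ha|/orP[/eqP->|/eqP->]] /orP[Hb|/orP[/eqP->|/eqP->]];
  rewrite ?eqxx ?lyx ?orbT //.
- exact: Hch.
- by case/orP: (Hcx a Ha) => ->; rewrite ?orbT.
- by case/orP: (Hcy a Ha) => ->; rewrite ?orbT.
- by case/orP: (Hcx b Hb) => ->; rewrite ?orbT.
- by case/orP: (Hcy b Hb) => ->; rewrite ?orbT.
Qed.

Lemma chain_add (T : finType) (R : rel T) (v : T) (B : {set T}) :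
  (forall a b, a \in B -> b \in B -> [|| a == b, R a b | R b a]) ->
  (forall b, b \in B -> [|| v == b, R v b | R b v]) ->
  (forall a b, a \in v |: B -> b \in v |: B -> [|| a == b, R a b | R b a]).
Proof.
move=> HB Hv a b; rewrite !in_setU1 => /orP[/eqP->|Ha] /orP[/eqP->|Hb].
- by rewrite eqxx.
- exact: Hv.
- by case/or3P: (Hv a Ha) => [/eqP->|->|->]; rewrite ?eqxx ?orbT.
- exact: HB.
Qed.

Lemma EU_facts (T : finType) (C : {set T}) (lt : rel T)
  (irr : forall a, a \in C -> ~~ lt a a) x y x' y' :
  x \in C -> y \in C -> lt y x -> x' \notin C -> y' \notin C -> x' != y' ->
  [/\ forall a b, a \in C -> b \in C -> EU C lt x y x' y' a b = lt a b && ~~ ((a == y) && (b == x)),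
      forall a, a \in C -> EU C lt x y x' y' a x' = (a == y) || lt a y,
      forall b, b \in C -> EU C lt x y x' y' x' b = lt x b,
      forall a, a \in C -> EU C lt x y x' y' a y' = lt a y &
      [/\ forall b, b \in C -> EU C lt x y x' y' y' b = (b == x) || lt x b,
          EU C lt x y x' y' x' y' = false, EU C lt x y x' y' y' x' = true,
          EU C lt x y x' y' x' x' = false & EU C lt x y x' y' y' y' = false]].
Proof.
move=> Hx Hy lyx Hx' Hy' Nxy'.
have neC : forall a, a \in C -> ((a == x') = false) /\ ((a == y') = false).
  by move=> a Ha; split; apply/negbTE/eqP => E; subst a; [rewrite Ha in Hx'|rewrite Ha in Hy'].
have [Nx'x _] := neC x Hx. have [Ny'x _] := neC y Hy.
have [Hxx' Hxy'] := neC x Hx. have [Hyx' Hyy'] := neC y Hy.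
have N1 : (x' == y') = false by apply/negbTE.
have N2 : (y' == x') = false by rewrite eq_sym N1.
have x'C : (x' \in C) = false by apply/negbTE.
have y'C : (y' \in C) = false by apply/negbTE.
have E1 : (x' == y) = false by rewrite eq_sym.
have E2 : (x' == x) = false by rewrite eq_sym.
have E3 : (y' == y) = false by rewrite eq_sym.
have E4 : (y' == x) = false by rewrite eq_sym.
split.
- move=> a b Ha Hb; have [H1 H2] := neC a Ha; have [H3 H4] := neC b Hb.
  by rewrite /EU Ha Hb H1 H2 H3 H4 /= orbF.
- move=> a Ha; have [H1 H2] := neC a Ha.
  by rewrite /EU Ha H1 H2 x'C eqxx N1 /= ?orbF ?andbF ?orbF.
- move=> b Hb; have [H1 H2] := neC b Hb.
  by rewrite /EU Hb H1 H2 x'C eqxx N1 /= ?orbF ?andbF ?orbF.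
- move=> a Ha; have [H1 H2] := neC a Ha.
  by rewrite /EU Ha H1 H2 y'C eqxx N2 /= ?orbF ?andbF ?orbF.
split.
- move=> b Hb; have [H1 H2] := neC b Hb.
  by rewrite /EU Hb H1 H2 y'C eqxx N2 /= ?orbF ?andbF ?orbF.
- by rewrite /EU x'C y'C eqxx N1 N2 /= ?orbF ?andbF ?orbF.
- by rewrite /EU !eqxx /= ?orbT.
- by rewrite /EU x'C eqxx N1 ?E1 ?E2 ?E3 ?E4 /= ?orbF ?andbF ?orbF.
- by rewrite /EU y'C eqxx N2 ?E1 ?E2 ?E3 ?E4 /= ?orbF ?andbF ?orbF.
Qed.

Lemma part3 (T : finType) (C : {set T}) (lt : rel T) bot top
  (irr : forall a, a \in C -> ~~ lt a a)
  (tr : forall a b c, a \in C -> b \in C -> c \in C -> lt a b -> lt b c -> lt a c)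
  (Hbot : bot \in C) (Htop : top \in C) x y x' y' :
  x \in C -> y \in C -> x \notin [set bot; top] -> y \notin [set bot; top] ->
  covers C lt y x -> x' \notin C -> y' \notin C -> x' != y' ->
  order_complex (unzip_carrier C x' y') (unzip_lt C lt x y x' y') bot top =
  edge_subdivision (edge_subdivision (order_complex C lt bot top) x y x') x x' y'.
Proof.
move=> Hx Hy Hxb Hyb cyx Hx' Hy' Nxy'.
have lyx : lt y x by case/and4P: cyx.
have nxy : ~~ lt x y.
  by apply/negP => H; move: (irr _ Hx); rewrite (tr _ _ _ Hx Hy Hx H lyx).
have [EC ECx' Ex'C ECy' [Ey'C Ex'y' Ey'x' Ex'x' Ey'y']] :=
  EU_facts irr Hx Hy lyx Hx' Hy' Nxy'.
have neC : forall a, a \in C -> ((a == x') = false) /\ ((a == y') = false).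
  by move=> a Ha; split; apply/negbTE/eqP => E; subst a; [rewrite Ha in Hx'|rewrite Ha in Hy'].
have [Exx' Exy'] := neC x Hx. have [Eyx' Eyy'] := neC y Hy.
have Eyx : (y == x) = false.
  by apply/negbTE/eqP => E; move: (irr _ Hy); rewrite {2}E lyx.
have Exy : (x == y) = false by rewrite eq_sym.
have Ex'y'b : (x' == y') = false by apply/negbTE.
have Ey'x'b : (y' == x') = false by rewrite eq_sym.
have Ex'x : (x' == x) = false by rewrite eq_sym.
have Ex'y : (x' == y) = false by rewrite eq_sym.
have Ey'x : (y' == x) = false by rewrite eq_sym.
have Ey'y : (y' == y) = false by rewrite eq_sym.
have x'C : (x' \in C) = false by apply/negbTE.
have y'C : (y' \in C) = false by apply/negbTE.
have HxS : x \in C :\ bot :\ top by move: Hxb; rewrite !inE negb_or Hx => /andP[-> ->].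
have HyS : y \in C :\ bot :\ top by move: Hyb; rewrite !inE negb_or Hy => /andP[-> ->].
have Nbt : forall v, v \notin C -> (v != bot) && (v != top).
  by move=> v Hv; apply/andP; split; apply/eqP => E; subst v;
    [rewrite Hbot in Hv|rewrite Htop in Hv].
set D := order_complex C lt bot top.
set U := unzip_carrier C x' y'.
pose good' := good C lt bot top x y.
have goodC : forall F, good' F -> forall c, c \in F -> c \in C.
  by move=> F [Hs _ _] c Hc; move/subsetP: Hs => /(_ c Hc) /setD1P[_ /setD1P[_ ->]].
have goodN : forall F, good' F ->
    [/\ x \notin F, y \notin F, x' \notin F & y' \notin F].
  move=> F HF; have [_ _ Hc] := HF.
  split; apply/negP => H.
  - by move: (Hc _ H); rewrite (negbTE nxy) (negbTE (irr _ Hx)).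
  - by move: (Hc _ H); rewrite (negbTE nxy) (negbTE (irr _ Hy)).
  - by move: (goodC F HF _ H); rewrite x'C.
  - by move: (goodC F HF _ H); rewrite y'C.
have Q1P : forall A, A \in edge_subdivision D x y x' <->
   (A \in D /\ ~~ ((x \in A) && (y \in A))) \/
   exists2 F, good' F & [\/ A = x' |: F, A = x |: (x' |: F) | A = y |: (x' |: F)].
  move=> A; split.
    case/in_subdivP => [[H1 H2]|[F HF H]].
      by left; split => //; rewrite subUset !sub1set in H2.
    by right; exists F => //; apply/(linkE irr tr Hx Hy Hxb Hyb cyx).
  case=> [[H1 H2]|[F HF H]]; apply/in_subdivP.
    by left; split => //; rewrite subUset !sub1set.
  by right; exists F => //; apply/(linkE irr tr Hx Hy Hxb Hyb cyx).
have L1P : forall G, G \in link (edge_subdivision D x y x') [set x; x'] <-> good' G.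
  move=> G; split.
    case/in_linkP => Hdis /Q1P [[HD _]|[F HF [E|E|E]]].
    - case/in_ocP: HD => Hs _.
      have : x' \in G :|: [set x; x'] by rewrite !inE eqxx !orbT.
      by move/(subsetP Hs)/setD1P => [_ /setD1P[_]]; rewrite x'C.
    - have : x \in G :|: [set x; x'] by rewrite !inE eqxx !orbT.
      have [HxF _ _ _] := goodN F HF.
      by rewrite E !inE Exx' (negbTE HxF).
    - suff -> : G = F by [].
      have [HxF _ Hx'F _] := goodN F HF.
      apply/setP => e; have := congr1 (fun S : {set T} => e \in S) E; rewrite /= !inE.
      case: (eqVneq e x) => [->|Nex].
        have HxG : (x \in G) = false by apply/negbTE/negP => H; move: (disjointFr Hdis H); rewrite !inE eqxx.
        by rewrite (negbTE HxF) HxG.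
      case: (eqVneq e x') => [->|Nex'].
        have HxG : (x' \in G) = false by apply/negbTE/negP => H; move: (disjointFr Hdis H); rewrite !inE eqxx orbT.
        by rewrite (negbTE Hx'F) HxG.
      by rewrite /= !orbF.
    - have : x \in G :|: [set x; x'] by rewrite !inE eqxx !orbT.
      have [HxF _ _ _] := goodN F HF.
      by rewrite E !inE Exx' Exy (negbTE HxF).
  move=> HG; have [HxG _ Hx'G _] := goodN G HG.
  apply/in_linkP; split.
    rewrite disjoint_subset; apply/subsetP => e He; rewrite !inE negb_or.
    by apply/andP; split; apply/eqP => E; subst e; [rewrite He in HxG|rewrite He in Hx'G].
  apply/Q1P; right; exists G => //; constructor 2.
  by apply/setP => e; rewrite !inE; case: (e \in G); case: (e == x); case: (e == x').
pose Q2 (A : {set T}) := (A \in D /\ ~~ ((x \in A) && (y \in A))) \/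
   exists2 F, good' F & ((A = x' |: F \/ A = y |: (x' |: F)) \/
      [\/ A = y' |: F, A = x |: (y' |: F) | A = x' |: (y' |: F)]).
have Q2P : forall A,
    A \in edge_subdivision (edge_subdivision D x y x') x x' y' <-> Q2 A.
  move=> A; split.
    case/in_subdivP => [[/Q1P H1 H2]|[G /L1P HG [E|E|E]]].
    - rewrite subUset !sub1set in H2.
      case: H1 => [H1|[F HF [E|E|E]]]; first by left.
      + by right; exists F => //; left; left.
      + by rewrite E !inE !eqxx /= orbT in H2.
      + by right; exists F => //; left; right.
    - by right; exists G => //; right; constructor 1.
    - by right; exists G => //; right; constructor 2.
    - by right; exists G => //; right; constructor 3.
  case => [[HD Hn]|[F HF [[E|E]|[E|E|E]]]]; apply/in_subdivP.
  - left; split; first by apply/Q1P; left.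
    rewrite subUset !sub1set; apply/negP => /andP[_ Hx'A].
    case/in_ocP: HD => Hs _.
    by move/(subsetP Hs)/setD1P: Hx'A => [_ /setD1P[_]]; rewrite x'C.
  - have [HxF _ _ _] := goodN F HF.
    left; split; first by apply/Q1P; right; exists F => //; constructor 1.
    by rewrite subUset !sub1set E !inE Exx' (negbTE HxF).
  - have [HxF _ _ _] := goodN F HF.
    left; split; first by apply/Q1P; right; exists F => //; constructor 3.
    by rewrite subUset !sub1set E !inE Exx' Exy (negbTE HxF).
  - by right; exists F; [apply/L1P|constructor 1].
  - by right; exists F; [apply/L1P|constructor 2].
  - by right; exists F; [apply/L1P|constructor 3].
have uE := unzipE irr tr Hx Hy cyx Hx' Hy' Nxy'.
pose EU' := EU C lt x y x' y'.
have inU : forall c, c \in C :\ bot :\ top -> c \in U :\ bot :\ top.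
  move=> c /setD1P[Ht /setD1P[Hb Hc]]; apply/setD1P; split => //; apply/setD1P; split => //.
  by rewrite !inE Hc !orbT.
have x'U : x' \in U :\ bot :\ top.
  by case/andP: (Nbt x' Hx') => Hb Ht; rewrite !inE eqxx Hb Ht.
have y'U : y' \in U :\ bot :\ top.
  by case/andP: (Nbt y' Hy') => Hb Ht; rewrite !inE eqxx Hb Ht orbT.
have goodS : forall F, good' F -> F \subset U :\ bot :\ top.
  move=> F [Hs _ _]; apply/subsetP => e He; apply: (inU); exact: (subsetP Hs).
have goodch : forall F, good' F -> forall a b, a \in F -> b \in F -> [|| a == b, EU' a b | EU' b a].
  move=> F HF a b Ha Hb; have [HxF HyF _ _] := goodN F HF; have [_ Hch _] := HF.
  have HaC := goodC F HF a Ha; have HbC := goodC F HF b Hb.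
  have Nay : (a == y) = false by apply/negbTE/eqP => E; subst a; rewrite Ha in HyF.
  have Nby : (b == y) = false by apply/negbTE/eqP => E; subst b; rewrite Hb in HyF.
  by rewrite /EU' !EC // Nay Nby /= !andbT; apply: Hch.
have OUP : forall A, A \in order_complex U (unzip_lt C lt x y x' y') bot top <-> Q2 A.
  move=> A; split.
    case/in_ocP => Hsub Hch0.
    have Hch : forall a b, a \in A -> b \in A -> [|| a == b, EU' a b | EU' b a].
      by move=> a b Ha Hb; rewrite /EU' -!uE; apply: Hch0.
    have HAC : forall a, a \in A -> a != x' -> a != y' -> a \in C.
      move=> a Ha N1 N2; move/subsetP: Hsub => /(_ a Ha) /setD1P[_ /setD1P[_]].
      by rewrite !inE (negbTE N1) (negbTE N2).
    have HAS : forall a, a \in A -> a != x' -> a != y' -> a \in C :\ bot :\ top.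
      move=> a Ha N1 N2; move/subsetP: Hsub => /(_ a Ha) /setD1P[Ht /setD1P[Hb _]].
      by apply/setD1P; split => //; apply/setD1P; split => //; apply: HAC.
    pose F := A :\ x' :\ y' :\ x :\ y.
    have inF : forall c, c \in F -> [/\ c \in A, c \in C, c != x & c != y].
      move=> c; rewrite !inE => /and5P[N1 N2 N3 N4 Hc].
      by rewrite Hc N1 N2 (HAC c Hc N4 N3).
    have goodF : (forall c, c \in F -> lt c y || lt x c) -> good' F.
      move=> Hc; split => //.
        apply/subsetP => c /setD1P[_ /setD1P[_ /setD1P[N3 /setD1P[N4 HcA]]]].
        exact: HAS HcA N4 N3.
      move=> a b Ha Hb; have [HaA HaC _ Nay] := inF a Ha; have [HbA HbC _ Nby] := inF b Hb.
      move: (Hch a b HaA HbA); rewrite /EU' !EC // (negbTE Nay) (negbTE Nby) /= !andbT.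
      done.
    have cx' : x' \in A -> forall c, c \in F -> lt c y || lt x c.
      move=> Hx'A c Hc; have [HcA HcC _ Ncy] := inF c Hc.
      have Ncx' : (c == x') = false by have [-> _] := neC c HcC.
      move: (Hch c x' HcA Hx'A); rewrite /EU' ECx' // Ex'C // Ncx' (negbTE Ncy) /=.
      done.
    have cy' : y' \in A -> forall c, c \in F -> lt c y || lt x c.
      move=> Hy'A c Hc; have [HcA HcC Ncx _] := inF c Hc.
      have Ncy' : (c == y') = false by have [_ ->] := neC c HcC.
      move: (Hch c y' HcA Hy'A); rewrite /EU' ECy' // Ey'C // Ncy' (negbTE Ncx) /=.
      done.
    have nx : x' \in A -> x \notin A.
      move=> Hx'A; apply/negP => HxA; move: (Hch x x' HxA Hx'A).
      by rewrite /EU' ECx' // Ex'C // Exx' Exy (negbTE nxy) (negbTE (irr _ Hx)).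
    have ny : y' \in A -> y \notin A.
      move=> Hy'A; apply/negP => HyA; move: (Hch y y' HyA Hy'A).
      by rewrite /EU' ECy' // Ey'C // Eyy' Eyx (negbTE nxy) (negbTE (irr _ Hy)).
    have shape : forall e, (e \in A) = (e \in F) || [|| (e == x') && (x' \in A),
        (e == y') && (y' \in A), (e == x) && (x \in A) | (e == y) && (y \in A)].
      move=> e; rewrite !inE.
      case: (eqVneq e x') => [->|N1]; first by rewrite Ex'y'b Ex'x Ex'y /= ?andbF ?orbF.
      case: (eqVneq e y') => [->|N2]; first by rewrite Ey'x Ey'y /= ?andbF ?orbF.
      case: (eqVneq e x) => [->|N3]; first by rewrite Exy /= ?andbF ?orbF.
      case: (eqVneq e y) => [->|N4] /=; first by rewrite ?andbF ?orbF.
      by rewrite ?andbF ?orbF.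
    case: (boolP (x' \in A)) => Hx'A; case: (boolP (y' \in A)) => Hy'A.
    - right; exists F; first exact: goodF (cx' Hx'A).
      right; constructor 3; apply/setP => e; rewrite shape Hx'A Hy'A.
      rewrite (negbTE (nx Hx'A)) (negbTE (ny Hy'A)) !in_setU1 /= ?andbT ?andbF ?orbF.
      by case: (e \in F); case: (e == x'); case: (e == y'); rewrite ?orbT.
    - right; exists F; first exact: goodF (cx' Hx'A).
      left; case HyA: (y \in A); [right|left]; apply/setP => e;
        rewrite shape Hx'A (negbTE Hy'A) (negbTE (nx Hx'A)) HyA !in_setU1 /= ?andbT ?andbF ?orbF;
        by case: (e \in F); case: (e == x'); case: (e == y); rewrite ?orbT.
    - right; exists F; first exact: goodF (cy' Hy'A).
      right; case HxA: (x \in A); [constructor 2|constructor 1]; apply/setP => e;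
        rewrite shape Hy'A (negbTE Hx'A) (negbTE (ny Hy'A)) HxA !in_setU1 /= ?andbT ?andbF ?orbF;
        by case: (e \in F); case: (e == x); case: (e == y'); rewrite ?orbT.
    - left; split.
        apply/in_ocP; split.
          apply/subsetP => a Ha; apply: HAS => //; apply/eqP => E; subst a.
            by rewrite Ha in Hx'A.
          by rewrite Ha in Hy'A.
        move=> a b Ha Hb.
        have Ha' : a \in C by apply: HAC => //; apply/eqP => E; subst a; rewrite Ha ?Hx'A ?Hy'A in Hx'A Hy'A.
        have Hb' : b \in C by apply: HAC => //; apply/eqP => E; subst b; rewrite Hb ?Hx'A ?Hy'A in Hx'A Hy'A.
        move: (Hch a b Ha Hb); rewrite /EU' !EC //.
        by case/or3P => [->|/andP[->]|/andP[->]]; rewrite ?orbT.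
      apply/negP => /andP[HxA HyA]; move: (Hch x y HxA HyA).
      by rewrite /EU' !EC // Exy (negbTE nxy) lyx !eqxx.
  move=> HQ; apply/in_ocP.
  suff [Hs Hc] : A \subset U :\ bot :\ top /\
      (forall a b, a \in A -> b \in A -> [|| a == b, EU' a b | EU' b a]).
    by split => // a b Ha Hb; rewrite !uE; apply: Hc.
  case: HQ => [[HD Hn]|[F HF HA]].
    case/in_ocP: HD => Hs Hch; split.
      by apply/subsetP => e He; apply: (inU); exact: (subsetP Hs).
    move=> a b Ha Hb.
    have HaC : a \in C by move/(subsetP Hs)/setD1P: Ha => [_ /setD1P[_ ->]].
    have HbC : b \in C by move/(subsetP Hs)/setD1P: Hb => [_ /setD1P[_ ->]].
    rewrite /EU' !EC //.
    have Nab : forall u v, u \in A -> v \in A -> ~~ ((u == y) && (v == x)).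
      move=> u v Hu Hv; apply/negP => /andP[/eqP Eu /eqP Ev]; subst u v.
      by rewrite Hu Hv in Hn.
    by rewrite !Nab // !andbT; apply: Hch.
  have [HxF HyF Hx'F Hy'F] := goodN F HF.
  have [_ _ Hgc] := HF.
  have cx' : forall b, b \in F -> [|| x' == b, EU' x' b | EU' b x'].
    move=> b Hb; have HbC := goodC F HF b Hb.
    by rewrite /EU' Ex'C // ECx' //; case/orP: (Hgc b Hb) => ->; rewrite ?orbT.
  have cy' : forall b, b \in F -> [|| y' == b, EU' y' b | EU' b y'].
    move=> b Hb; have HbC := goodC F HF b Hb.
    by rewrite /EU' Ey'C // ECy' //; case/orP: (Hgc b Hb) => ->; rewrite ?orbT.
  have gS := goodS F HF; have gc := goodch F HF.
  have subA : forall v (B : {set T}), v \in U :\ bot :\ top -> B \subset U :\ bot :\ top ->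
      v |: B \subset U :\ bot :\ top.
    by move=> v B Hv HB; rewrite subUset sub1set Hv.
  case: HA => [[->|->]|[->|->|->]].
  - by split; [apply: (subA) | apply: chain_add].
  - split; first by apply: (subA); [apply: (inU)|apply: (subA)].
    apply: chain_add; first by apply: chain_add.
    move=> b; rewrite in_setU1 => /orP[/eqP->|Hb].
      by rewrite /EU' ECx' // eqxx /= orbT.
    have HbC := goodC F HF b Hb.
    have Nby : (b == y) = false by apply/negbTE/eqP => E; subst b; rewrite Hb in HyF.
    have Nbx : (b == x) = false by apply/negbTE/eqP => E; subst b; rewrite Hb in HxF.
    rewrite /EU' !EC // Nby Nbx eqxx /= ?andbT.
    case/orP: (Hgc b Hb) => [->|H]; first by rewrite !orbT.
    by rewrite (tr _ _ _ Hy Hx HbC lyx H) orbT.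
  - by split; [apply: (subA) | apply: chain_add].
  - split; first by apply: (subA); [apply: (inU)|apply: (subA)].
    apply: chain_add; first by apply: chain_add.
    move=> b; rewrite in_setU1 => /orP[/eqP->|Hb].
      by rewrite /EU' Ey'C // eqxx /= !orbT.
    have HbC := goodC F HF b Hb.
    have Nby : (b == y) = false by apply/negbTE/eqP => E; subst b; rewrite Hb in HyF.
    rewrite /EU' !EC // Nby Exy eqxx /= ?andbT.
    case/orP: (Hgc b Hb) => [H|->]; last by rewrite !orbT.
    by rewrite (tr _ _ _ HbC Hy Hx H lyx) !orbT.
  - split; first by apply: (subA) => //; apply: (subA).
    apply: chain_add; first by apply: chain_add.
    move=> b; rewrite in_setU1 => /orP[/eqP->|Hb]; first by rewrite /EU' Ey'x' !orbT.
    exact: cx'.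
by apply/setP => A; apply/idP/idP => H; [apply/Q2P/OUP|apply/OUP/Q2P].
Qed.


Lemma forall_U (T : finType) (C : {set T}) (u v : T) (P : pred T) :
  [forall c in u |: (v |: C), P c] = [&& P u, P v & [forall c in C, P c]].
Proof.
apply/forall_inP/and3P => [H|[Hu Hv /forall_inP H] c].
  split; [apply: H; rewrite !inE eqxx // | apply: H; rewrite !inE eqxx orbT //|].
  by apply/forall_inP => c Hc; apply: H; rewrite !inE Hc !orbT.
by rewrite !inE => /orP[/eqP->//|/orP[/eqP->//|/H]].
Qed.

Lemma part1 (T : finType) (C : {set T}) (lt : rel T) bot top
  (irr : forall a, a \in C -> ~~ lt a a)
  (tr : forall a b c, a \in C -> b \in C -> c \in C -> lt a b -> lt b c -> lt a c)
  (Hbot : bot \in C) (Htop : top \in C) x y x' y' :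
  x \in C -> y \in C -> x \notin [set bot; top] -> y \notin [set bot; top] ->
  covers C lt y x -> x' \notin C -> y' \notin C -> x' != y' ->
  zippable (unzip_carrier C x' y') (unzip_lt C lt x y x' y') bot top x' y' y /\
  same_poset (zip_carrier (unzip_carrier C x' y') x' y')
             (zip_lt (unzip_carrier C x' y') (unzip_lt C lt x y x' y') x' y' y) C lt.
Proof.
move=> Hx Hy Hxb Hyb cyx Hx' Hy' Nxy'.
have lyx : lt y x by case/and4P: cyx.
have nxy : ~~ lt x y.
  by apply/negP => H; move: (irr _ Hx); rewrite (tr _ _ _ Hx Hy Hx H lyx).
have [EC ECx' Ex'C ECy' [Ey'C Ex'y' Ey'x' Ex'x' Ey'y']] :=
  EU_facts irr Hx Hy lyx Hx' Hy' Nxy'.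
have -> : unzip_lt C lt x y x' y' = EU C lt x y x' y'.
  apply: functional_extensionality => a; apply: functional_extensionality => b.
  have H := unzipE irr tr Hx Hy cyx Hx' Hy' Nxy'. exact: H.
set R := EU C lt x y x' y'.
set U := unzip_carrier C x' y'.
have neC : forall a, a \in C -> ((a == x') = false) /\ ((a == y') = false).
  by move=> a Ha; split; apply/negbTE/eqP => E; subst a; [rewrite Ha in Hx'|rewrite Ha in Hy'].
have [Exx' Exy'] := neC x Hx. have [Eyx' Eyy'] := neC y Hy.
have Eyx : (y == x) = false.
  by apply/negbTE/eqP => E; move: (irr _ Hy); rewrite {2}E lyx.
have Exy : (x == y) = false by rewrite eq_sym.
have Ex'y'b : (x' == y') = false by apply/negbTE.
have Ey'x'b : (y' == x') = false by rewrite eq_sym.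
have Ex'y : (x' == y) = false by rewrite eq_sym.
have Ey'y : (y' == y) = false by rewrite eq_sym.
have x'C : (x' \in C) = false by apply/negbTE.
have y'C : (y' \in C) = false by apply/negbTE.
have inU : forall c, (c \in U) = [|| c == x', c == y' | c \in C] by move=> c; rewrite !inE.
have Ux' : x' \in U by rewrite inU eqxx.
have Uy' : y' \in U by rewrite inU eqxx orbT.
have UC : forall c, c \in C -> c \in U by move=> c Hc; rewrite inU Hc !orbT.
have Exy'y : EU C lt x y x' y' y x' by rewrite ECx' // eqxx.
have Ey'x : EU C lt x y x' y' y' x by rewrite Ey'C // eqxx.
have Ryy' : R y y' = false by rewrite /R ECy' // (negbTE (irr _ Hy)).
have Ry'y : R y' y = false by rewrite /R Ey'C // Eyx (negbTE nxy).
have Rx'y : R x' y = false by rewrite /R Ex'C // (negbTE nxy).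
have Rx'x' : R x' x' = false by [].
have Ry'y' : R y' y' = false by [].
have Ry'x' : R y' x' = true by [].
have Ryx' : R y x' = true by [].
split.
  split.
  - by rewrite Ux' Uy' UC.
  - split => //; rewrite !inE negb_or; apply/andP; split; apply/eqP => E; subst;
      by [rewrite Hbot in Hx'|rewrite Htop in Hx'|rewrite Hbot in Hy'|rewrite Htop in Hy'].
  - split; first by rewrite eq_sym Eyy'.
    move=> w; rewrite /covers forall_U.
    case: (eqVneq w x') => [->|Nwx']; first by rewrite Rx'x' !andbF Ex'y'b Ex'y.
    case: (eqVneq w y') => [->|Nwy'].
      rewrite Uy' Ux' Ry'x' Rx'x' Ry'y' !andbF /= ?eqxx; apply/forall_inP => c Hc.
      rewrite /R Ey'C // ECx' //; apply/negP => /andP[/orP[/eqP E|H1] /orP[/eqP E'|H2]].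
      + by subst c; rewrite E' eqxx in Exy.
      + by subst c; rewrite H2 in nxy.
      + by subst c; rewrite H1 in nxy.
      + by rewrite (tr _ _ _ Hx Hc Hy H1 H2) in nxy.
    rewrite /=.
    case: (boolP (w \in C)) => HwC; last first.
      rewrite inU (negbTE Nwx') (negbTE Nwy') (negbTE HwC) /=.
      by apply/esym/negbTE/eqP => E; subst w; rewrite Hy in HwC.
    rewrite UC // Ux' Rx'x' Ry'x' /=.
    case: (eqVneq w y) => [->|Nwy] /=.
      rewrite Ryx' Ryy' /= ?andbT; apply/forall_inP => c Hc.
      rewrite /R EC // ECx' // eqxx /=; apply/negP => /andP[/andP[H1 _] /orP[/eqP E|H2]].
        by subst c; move: (irr _ Hy); rewrite H1.
      by move: (irr _ Hy); rewrite (tr _ _ _ Hy Hc Hy H1 H2).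
    apply/negbTE/negP => /and4P[Hwx _ _ /forall_inP /(_ y Hy)].
    by move: Hwx; rewrite /R !ECx' // EC // (negbTE Nwy) /= => ->; rewrite eqxx.

  - split.
      rewrite /= Ux' Ry'x' Ryx' /=; apply/forallP => v; apply/implyP => /and3P[].
      rewrite inU => /or3P[/eqP->|/eqP->|HvC]; first by rewrite Rx'x'.
        by rewrite Ry'y'.
      rewrite /R Ey'C // EC // ECx' // eqxx /= => H1 /andP[H2 H3].
      have Hxv : lt x v by case/orP: H1 => // /eqP E; subst v; rewrite eqxx in H3.
      apply/negP => /orP[/eqP E|H]; first by subst v; rewrite Hxv in nxy.
      by rewrite (tr _ _ _ Hx HvC Hy Hxv H) in nxy.
    move=> u /andP[/and3P[]].
    rewrite inU => /or3P[/eqP->//|/eqP->|HuC]; first by rewrite Ry'y'.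
    rewrite /R Ey'C // EC // eqxx /= => H1 /andP[_ H3] /forallP /(_ x') /implyP.
    rewrite Ux' Ey'x' ECx' // eqxx Ex'C //= => H.
    case/orP: H1 => [/eqP E|Hxu]; first by subst u; rewrite eqxx in H3.
    by move: (H isT); rewrite Hxu.
  - move=> w.
    suff H : forall v, v = y' \/ v = y -> covers U R w v = covers C lt w y.
      by rewrite H ?H; [| right | left].
    move=> v Hv.
    have HvU : v \in U by case: Hv => ->; [|apply: UC].
    have Rx'v : EU C lt x y x' y' x' v = false by case: Hv => ->; [|rewrite Ex'C // (negbTE nxy)].
    have Ry'v : EU C lt x y x' y' y' v = false.
      by case: Hv => ->; [|rewrite Ey'C // Eyx (negbTE nxy)].
    have Rcv : forall c, c \in C -> EU C lt x y x' y' c v = lt c y.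
      move=> c Hc; case: Hv => ->; first by rewrite ECy'.
      by rewrite EC // Eyx andbF /= andbT.

    rewrite /covers forall_U /R HvU Hy Rx'v Ry'v !andbF /= ?andbT.
    case: (eqVneq w x') => [->|Nwx']; first by rewrite x'C Rx'v !andbF.
    case: (eqVneq w y') => [->|Nwy']; first by rewrite y'C Ry'v !andbF.
    case: (boolP (w \in C)) => HwC; last first.
      by rewrite inU (negbTE Nwx') (negbTE Nwy') (negbTE HwC).
    rewrite UC // Rcv //=.
    case: (boolP (lt w y)) => Hwy //=.
    have Nwy : (w == y) = false.
      by apply/negbTE/eqP => E; subst w; move: (irr _ Hy); rewrite Hwy.
    apply: eq_forallb_in => c Hc.
    by rewrite EC // Nwy /= andbT Rcv.
have Ecar : zip_carrier U x' y' = C.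
  apply/setP => e; rewrite /zip_carrier !in_setD1 inU.
  case: (eqVneq e y') => [->|Ney] /=; first by rewrite y'C.
  case: (eqVneq e x') => [->|Nex] /=; first by rewrite x'C.
  by [].
split => //.
rewrite Ecar /zip_lt Ecar => a b Ha Hb.
apply/idP/idP.
  move=> H; suff : [&& a \in C, b \in C & lt a b] by case/and3P.
  move: H; apply: (@tclos_ind _ _ (fun u v => [&& u \in C, v \in C & lt u v])).
    move=> u v /and3P[Hu Hv /orP[H|/andP[/eqP Eu H]]].
      by rewrite Hu Hv; move: H; rewrite /R EC // => /andP[-> _].
    subst u; rewrite Hy Hv /=; move: H; rewrite /R Ey'C // => /orP[/eqP->//|H].
    exact: tr Hy Hx Hv lyx H.
  move=> u v w /and3P[Hu _ Huv] /and3P[Hv Hw Hvw].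
  by rewrite Hu Hw (tr _ _ _ Hu Hv Hw Huv Hvw).
move=> Hab; apply: tclos_step; rewrite /= Ha Hb /=.
case: (boolP ((a == y) && (b == x))) => [/andP[/eqP-> /eqP->]|N].
  by rewrite eqxx /R Ey'C // eqxx orbT.
by rewrite /R EC // Hab N.
Qed.


Theorem proposition2p4 (T : finType) (C : {set T}) (lt : rel T)
    (bot top : T) (r : T -> nat) :
  graded_poset C lt bot top r ->
  (* (1) *)
  (forall x y x' y' : T,
     x \in C -> y \in C -> x \notin [set bot; top] -> y \notin [set bot; top] ->
     covers C lt y x ->
     x' \notin C -> y' \notin C -> x' != y' ->
     zippable (unzip_carrier C x' y') (unzip_lt C lt x y x' y') bot top x' y' y /\
     same_poset (zip_carrier (unzip_carrier C x' y') x' y')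
                (zip_lt (unzip_carrier C x' y') (unzip_lt C lt x y x' y') x' y' y)
                C lt) /\
  (* (2) *)
  (forall x y z : T,
     zippable C lt bot top x y z ->
     order_complex (zip_carrier C x y) (zip_lt C lt x y z) bot top =
     edge_contraction (edge_contraction (order_complex C lt bot top) y x) x z) /\
  (* (3) *)
  (forall x y x' y' : T,
     x \in C -> y \in C -> x \notin [set bot; top] -> y \notin [set bot; top] ->
     covers C lt y x ->
     x' \notin C -> y' \notin C -> x' != y' ->
     order_complex (unzip_carrier C x' y') (unzip_lt C lt x y x' y') bot top =
     edge_subdivision (edge_subdivision (order_complex C lt bot top) x y x') x x' y').
Proof.
case=> irr tr [Hbot Htop] _ _.
split; first by move=> x y x' y'; apply: part1.
split; first by move=> x y z; apply: part2.
by move=> x y x' y'; apply: part3.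
Qed.
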